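(* A quadratical quasigroup of order $9$ is not $k$-translatable, for any $k\in\{1,\dots,8\}$, with respect to any ordering of its elements.
   Context: A quadratical quasigroup is a quasigroup satisfying $xy\cdot x=zx\cdot yz$ for all $x,y,z$ (equivalently, a groupoid satisfying $x\cdot x=x$, $yx\cdot xy=x$, $xy\cdot zw=xz\cdot yw$). A finite groupoid with ordering $q_1,\dots,q_n$ is $k$-translatable ($1\le k<n$) with respect to this ordering if $q_i\cdot q_j=q_{i-1}\cdot q_{j-k}$ for all $i\in\{2,\dots,n\}$, $j\in\{1,\dots,n\}$, indices taken modulo $n$ in $\{1,\dots,n\}$. *)

(* Defs.v *)
From mathcomp Require Import all_boot.
Set Implicit Arguments. Unset Strict Implicit. Unset Printing Implicit Defensive.

Definition quasigroup (T : Type) (op : T -> T -> T) : Prop :=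
  (forall a, bijective (op a)) /\ (forall a, bijective (fun x => op x a)).

Definition quadratical (T : Type) (op : T -> T -> T) : Prop :=
  quasigroup op /\
  forall x y z, op (op x y) x = op (op z x) (op y z).

(* Index arithmetic modulo n on 0-based indices 'I_n
   (paper uses 1-based indices q_1..q_n, taken modulo n). *)
Definition idx_mod (n : nat) (m : nat) : 'I_n.+1 := inord (m %% n.+1).

(* k-translatable w.r.t. the ordering q : 'I_n -> T (q bijective), where
   0-based position i corresponds to the paper's q_{i+1}:
   q_i * q_j = q_{i-1} * q_{j-k} for i in {2..n}, j in {1..n}. *)
Definition k_translatable (T : Type) (op : T -> T -> T) (n : nat)
    (q : 'I_n.+1 -> T) (k : nat) : Prop :=
  1 <= k < n.+1 /\
  forall i j : 'I_n.+1, 1 <= i ->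
    op (q i) (q j) = op (q (idx_mod n (i + n))) (q (idx_mod n (j + n.+1 - k))).

(* Main.v *)
Require Import Defs.
From mathcomp Require Import all_boot.
From mathcomp Require Import zify.

Theorem corollary8p16 (T : finType) (op : T -> T -> T) :
  #|T| = 9 -> quadratical op ->
  forall (q : 'I_9 -> T), bijective q ->
  forall k : nat, 1 <= k <= 8 -> ~ k_translatable op q k.
Proof.
move=> _ [[Hl _] Hqd] q qbij k Hk [_ Htr].
have idem : forall x, op x x = x.
  move=> x; have := Hqd x x x.
  by move/(bij_inj (Hl (op x x)))=> <-.
pose Q (m : nat) := q (inord (m %% 9) : 'I_9).
have Qm : forall a b, a %% 9 = b %% 9 -> Q a = Q b by move=> a b; rewrite /Q => ->.
have Qinj : forall a b, Q a = Q b -> a %% 9 = b %% 9.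
  move=> a b /(bij_inj qbij)/(congr1 val).
  by rewrite /= !inordK // ltn_mod.
have T1 : forall i j, 1 <= i < 9 -> op (Q i) (Q j) = op (Q (i+8)) (Q (j + 9 - k)).
  move=> i j /andP [Hi1 Hi].
  have Hj : j %% 9 < 9 by rewrite ltn_mod.
  have := Htr (Ordinal Hi) (Ordinal Hj) Hi1.
  rewrite /idx_mod /=.
  have -> : q (Ordinal Hi) = Q i.
    by rewrite /Q; congr q; apply/val_inj; rewrite /= modn_small // inordK.
  have -> : q (Ordinal Hj) = Q j.
    by rewrite /Q; congr q; apply/val_inj; rewrite /= inordK // ?ltn_mod // modn_mod.
  move=> ->; congr op; apply: Qm; lia.
have A : forall i j, i < 9 -> op (Q i) (Q j) = op (Q 0) (Q (j + i * (9 - k))).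
  elim=> [|i IH] j Hi; first by rewrite mul0n addn0.
  rewrite T1; last by lia.
  rewrite (Qm (i.+1 + 8) i); last by lia.
  rewrite IH; last by lia.
  congr op; apply: Qm; congr modn; lia.
have A' : forall i j, op (Q i) (Q j) = op (Q 0) (Q (j + i * (9 - k))).
  move=> i j; rewrite (Qm i (i %% 9)) ?modn_mod // A ?ltn_mod //.
  congr op; apply: Qm.
  by rewrite -modnDmr modnMml modnDmr.
have I0 : forall i, Q i = op (Q 0) (Q (i * (10 - k))).
  move=> i; rewrite -{1}(idem (Q i)) A'; apply: congr1; apply: Qm; congr modn; lia.
have row0 : forall c m, (c * (10 - k)) %% 9 = 1 -> op (Q 0) (Q m) = Q (c * m).
  move=> c m Hc; rewrite (I0 (c * m)); apply: congr1; apply: Qm.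
  by rewrite mulnAC -modnMml Hc mul1n.
have gen : forall c, (c * (10 - k)) %% 9 = 1 ->
    (c * (c + c * (9 - k) * (9 - k))) %% 9 != 0 -> False.
  move=> c Hc Hu.
  have := Hqd (Q 0) (Q 0) (Q 1).
  rewrite !idem (A' 1 0) (A' 0 1) !(row0 c) // A' (row0 c) // => /Qinj.
  move=> E; move: Hu; rewrite mod0n mul0n addn0 add0n !mul1n muln1 in E.
  by rewrite -E eqxx.
have bad3 : (3 * (10 - k)) %% 9 = 0 -> False.
  move=> H3; have := I0 3; rewrite (Qm (3 * (10 - k)) 0) ?H3 // idem => /Qinj.
  by [].
move: Hk; case: k Htr T1 A A' I0 row0 gen bad3 => [|[|[|[|[|[|[|[|[|]]]]]]]]] //= _ _ _ _ _ _ gen' bad3' _.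
all: first [by apply: (gen' 8) | by apply: (gen' 4) | by apply: (gen' 2) | by apply: (gen' 5) | by apply: (gen' 7)].
Qed.
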